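(* If a system $C=(1,c_2,c_3,c_4,c_5,2c_5-c_3)$ is canonical and its subsystem $(1,c_2,c_3,c_4,c_5)$ is noncanonical, then $C$ is $(1,c_2,2c_2-1,c_4,c_2+c_4-1,2c_4-1)$ or $(1,c_2,2c_2,c_4,c_2+c_4,2c_4)$.
   Context: A system is a tuple $C=(c_1,\dots,c_n)$ of integers with $1=c_1<c_2<\dots<c_n$; for $k\le n$, $(c_1,\dots,c_k)$ is a subsystem. For a positive integer $v$, $\mathrm{opt}_C(v)$ is the minimum of $\sum_i x_i$ over $x\in\mathbb{Z}_{\ge0}^n$ with $\sum_i c_ix_i=v$. The greedy representation of $v$ is produced by: for $i=n$ down to $1$, while $c_i\le$ remaining value, take a coin $c_i$. $\mathrm{grd}_C(v)$ is its number of coins. A positive integer $w$ is a counterexample if $\mathrm{opt}_C(w)<\mathrm{grd}_C(w)$; $C$ is canonical if it has none, noncanonical otherwise. *)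

(* Defs.v *)
From mathcomp Require Import all_boot.
Set Implicit Arguments. Unset Strict Implicit. Unset Printing Implicit Defensive.

Definition is_system (c : seq nat) : Prop :=
  head 0 c = 1 /\ sorted ltn c.

(* The "while
   c_i <= remaining, take c_i" loop takes exactly (r %/ c_i) coins. *)
Fixpoint greedy_aux (cs_desc : seq nat) (r : nat) : nat :=
  match cs_desc with
  | [::] => 0
  | ci :: cs => r %/ ci + greedy_aux cs (r %% ci)
  end.

Definition grd (c : seq nat) (v : nat) : nat := greedy_aux (rev c) v.

Definition is_repr (c : seq nat) (v : nat) (x : seq nat) : Prop :=
  size x = size c /\ \sum_(i < size c) nth 0 c i * nth 0 x i = v.

(* opt_C(v) = min sum x_i over representations; opt_C(w) < grd_C(w)
   holds iff some representation uses fewer coins than greedy. *)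
Definition counterexample (c : seq nat) (w : nat) : Prop :=
  0 < w /\ exists x, is_repr c w x /\ sumn x < grd c w.

Definition canonical (c : seq nat) : Prop := forall w, ~ counterexample c w.
Definition noncanonical (c : seq nat) : Prop := exists w, counterexample c w.

(* Main.v *)
Require Import Defs.
From mathcomp Require Import all_boot.
From mathcomp Require Import zify.
From Stdlib Require Import Classical.
Set Implicit Arguments. Unset Strict Implicit.

Definition g5 (a b c d v : nat) :=
  v %/ d + ((v %% d) %/ c + (((v %% d) %% c) %/ b +
  ((((v %% d) %% c) %% b) %/ a + ((((v %% d) %% c) %% b) %% a)))).

Definition g6 (a b c d e v : nat) := v %/ e + g5 a b c d (v %% e).

Lemma grd5 a b c d v : grd [:: 1; a; b; c; d] v = g5 a b c d v.
Proof. by rewrite /grd /= divn1 addn0. Qed.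

Lemma grd6 a b c d e v : grd [:: 1; a; b; c; d; e] v = g6 a b c d e v.
Proof. by rewrite /grd /= divn1 addn0. Qed.

Lemma g5_0 a b c d : g5 a b c d 0 = 0.
Proof. by rewrite /g5 !mod0n !div0n. Qed.

Lemma cex5P a b c d w : counterexample [:: 1; a; b; c; d] w ->
  0 < w /\ exists y1 y2 y3 y4 y5,
    y1 + a * y2 + b * y3 + c * y4 + d * y5 = w /\
    y1 + y2 + y3 + y4 + y5 < g5 a b c d w.
Proof.
case=> w0 [x [[sz sm] lt]]; split=> //.
move: sz sm lt; rewrite grd5.
case: x => [|x1 [|x2 [|x3 [|x4 [|x5 [|]]]]]] //= _.
rewrite !big_ord_recl big_ord0 /= => <- lt.
exists x1, x2, x3, x4, x5; split; lia.
Qed.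

Lemma cex5I a b c d y1 y2 y3 y4 y5 :
  0 < y1 + a * y2 + b * y3 + c * y4 + d * y5 ->
  y1 + y2 + y3 + y4 + y5 < g5 a b c d (y1 + a * y2 + b * y3 + c * y4 + d * y5) ->
  counterexample [:: 1; a; b; c; d] (y1 + a * y2 + b * y3 + c * y4 + d * y5).
Proof.
move=> p lt; split=> //; exists [:: y1; y2; y3; y4; y5]; split.
  by split=> //=; rewrite !big_ord_recl big_ord0 /=; lia.
by rewrite grd5 /=; lia.
Qed.

Lemma canon6P a b c d e : canonical [:: 1; a; b; c; d; e] ->
  forall y1 y2 y3 y4 y5 y6,
  g6 a b c d e (y1 + a * y2 + b * y3 + c * y4 + d * y5 + e * y6)
    <= y1 + y2 + y3 + y4 + y5 + y6.
Proof.
move=> H y1 y2 y3 y4 y5 y6; rewrite leqNgt; apply/negP => lt.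
set v := (y1 + a * y2 + _ + _ + _ + _) in lt.
case: (posnP v) => [v0|vp].
  by move: lt; rewrite v0 /g6 div0n mod0n g5_0.
apply: (H v); split=> //; exists [:: y1; y2; y3; y4; y5; y6]; split.
  by split=> //=; rewrite !big_ord_recl big_ord0 /= /v; lia.
by rewrite grd6 /=; lia.
Qed.

Lemma min_ex (P : nat -> Prop) : (exists w, P w) ->
  exists w, P w /\ forall u, u < w -> ~ P u.
Proof.
case=> w; elim/ltn_ind: w => w IH Pw.
case: (classic (exists u, u < w /\ P u)) => [[u [lt Pu]]|N].
  exact: IH u lt Pu.
exists w; split=> // u lt Pu; apply: N; by exists u.
Qed.

Lemma div_one e t : e <= t -> t < e + e -> t %/ e = 1 /\ t %% e = t - e.
Proof.
move=> h1 h2; have ep : 0 < e by lia.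
have -> : t = 1 * e + (t - e) by lia.
rewrite divnMDl // modnMDl divn_small ?modn_small; lia.
Qed.

Lemma g5_sub a b c d v : 0 < d -> d <= v -> g5 a b c d v = 1 + g5 a b c d (v - d).
Proof.
move=> dp h; rewrite /g5.
have E : v = 1 * d + (v - d) by lia.
have -> : v %/ d = 1 + (v - d) %/ d by rewrite {1}E divnMDl.
have -> : v %% d = (v - d) %% d by rewrite {1}E modnMDl.
lia.
Qed.

Lemma g5_rep a b c d v : exists y1 y2 y3 y4 y5,
  y1 + a * y2 + b * y3 + c * y4 + d * y5 = v /\
  y1 + y2 + y3 + y4 + y5 = g5 a b c d v.
Proof.
exists ((((v %% d) %% c) %% b) %% a), ((((v %% d) %% c) %% b) %/ a),
  (((v %% d) %% c) %/ b), ((v %% d) %/ c), (v %/ d); split; last by rewrite /g5; lia.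
have E1 := divn_eq v d. have E2 := divn_eq (v %% d) c.
have E3 := divn_eq ((v %% d) %% c) b. have E4 := divn_eq (((v %% d) %% c) %% b) a.
lia.
Qed.

Definition Mn a b c d w := forall y1 y2 y3 y4 y5,
  y1 + a * y2 + b * y3 + c * y4 + d * y5 < w ->
  g5 a b c d (y1 + a * y2 + b * y3 + c * y4 + d * y5) <= y1 + y2 + y3 + y4 + y5.

Lemma used a b c d w S ck y1 y2 y3 y4 y5 : Mn a b c d w -> 0 < d -> 0 < ck ->
  (forall z1 z2 z3 z4 z5, exists t1 t2 t3 t4 t5,
     t1 + a * t2 + b * t3 + c * t4 + d * t5 = z1 + a * z2 + b * z3 + c * z4 + d * z5 + ck /\
     t1 + t2 + t3 + t4 + t5 = z1 + z2 + z3 + z4 + z5 + 1) ->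
  y1 + a * y2 + b * y3 + c * y4 + d * y5 + ck = w ->
  y1 + y2 + y3 + y4 + y5 + 1 = S -> S < g5 a b c d w -> d + ck <= w -> False.
Proof.
move=> M dp cp add ev es lt le.
set u := y1 + a * y2 + b * y3 + c * y4 + d * y5 in ev.
have h1 := M y1 y2 y3 y4 y5; rewrite -/u in h1.
have {}h1 : g5 a b c d u <= S - 1 by move: h1; lia.
have Hu : g5 a b c d u = 1 + g5 a b c d (u - d) by apply: g5_sub; lia.
have [g1 [g2 [g3 [g4 [g5' [gv gs]]]]]] := g5_rep a b c d (u - d).
have [z1 [z2 [z3 [z4 [z5 [zv zs]]]]]] := add g1 g2 g3 g4 g5'.
have h2 := M z1 z2 z3 z4 z5; rewrite zv gv in h2.
have {}h2 : g5 a b c d (u - d + ck) <= z1 + z2 + z3 + z4 + z5 by apply: h2; lia.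
have Hw : g5 a b c d w = 1 + g5 a b c d (w - d) by apply: g5_sub; lia.
rewrite (_ : w - d = u - d + ck) in Hw; last by lia.
lia.
Qed.

Lemma g5_small a b c d t : b < c -> c < d -> 0 < a -> t < c ->
  0 < t -> g5 a b c d t <= 1 -> t = 1 \/ t = a \/ t = b.
Proof.
move=> bc cd ap tc tp; rewrite /g5 (divn_small (ltn_trans tc cd)) (modn_small (ltn_trans tc cd)).
rewrite (divn_small tc) (modn_small tc) add0n add0n.
have E1 := divn_eq t b. have E2 := divn_eq (t %% b) a.
case Q: (t %/ b) E1 => [|[|q]] E1 H.
- have Q2 : (t %% b) %/ a <= 1 by lia.
  case Q3: ((t %% b) %/ a) Q2 E2 H => [|[|]] //= _ E2 H; lia.
- case Q3: ((t %% b) %/ a) E2 H => [|] //= E2 H; lia.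
- by move: H; rewrite !addSn.
Qed.


Theorem lemma8 (c2 c3 c4 c5 : nat) :
  is_system [:: 1; c2; c3; c4; c5; 2 * c5 - c3] ->
  canonical [:: 1; c2; c3; c4; c5; 2 * c5 - c3] ->
  noncanonical [:: 1; c2; c3; c4; c5] ->
  (c3 = 2 * c2 - 1 /\ c5 = c2 + c4 - 1 /\ 2 * c5 - c3 = 2 * c4 - 1) \/
  (c3 = 2 * c2 /\ c5 = c2 + c4 /\ 2 * c5 - c3 = 2 * c4).
Proof.
move=> [_ srt] Ccan [w0 Pw0].
move: srt; rewrite /= !andbT => /and5P [h1 h2 h3 h4 h5].
have [w [Pw Min]] := @min_ex (fun w => counterexample [:: 1; c2; c3; c4; c5] w)
  (ex_intro _ w0 Pw0).
have [wp [x1 [x2 [x3 [x4 [x5 [xv xs]]]]]]] := cex5P Pw.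
have M : Mn c2 c3 c4 c5 w.
  move=> y1 y2 y3 y4 y5 lt; rewrite leqNgt; apply/negP => H.
  case: (posnP (y1 + c2 * y2 + c3 * y3 + c4 * y4 + c5 * y5)) => [v0|vp].
    by move: H; rewrite v0 g5_0.
  exact: (Min _ lt (cex5I vp H)).
have CC := canon6P Ccan.
have dp : 0 < c5 by lia.
have U1 : 0 < x1 -> w < c5 + 1.
  case: x1 xv xs => [|y1] // xv xs _; rewrite ltnNge; apply/negP => le.
  apply: (used M dp (ck := 1) (y1 := y1) (y2 := x2) (y3 := x3) (y4 := x4) (y5 := x5)
     _ _ _ _ xs le) => //; try lia.
  by move=> z1 z2 z3 z4 z5; exists z1.+1, z2, z3, z4, z5; split; lia.
have U2 : 0 < x2 -> w < c5 + c2.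
  case: x2 xv xs => [|y2] // xv xs _; rewrite ltnNge; apply/negP => le.
  apply: (used M dp (ck := c2) (y1 := x1) (y2 := y2) (y3 := x3) (y4 := x4) (y5 := x5)
     _ _ _ _ xs le) => //; try lia.
  by move=> z1 z2 z3 z4 z5; exists z1, z2.+1, z3, z4, z5; split; lia.
have U3 : 0 < x3 -> w < c5 + c3.
  case: x3 xv xs => [|y3] // xv xs _; rewrite ltnNge; apply/negP => le.
  apply: (used M dp (ck := c3) (y1 := x1) (y2 := x2) (y3 := y3) (y4 := x4) (y5 := x5)
     _ _ _ _ xs le) => //; try lia.
  by move=> z1 z2 z3 z4 z5; exists z1, z2, z3.+1, z4, z5; split; lia.
have U4 : 0 < x4 -> w < c5 + c4.
  case: x4 xv xs => [|y4] // xv xs _; rewrite ltnNge; apply/negP => le.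
  apply: (used M dp (ck := c4) (y1 := x1) (y2 := x2) (y3 := x3) (y4 := y4) (y5 := x5)
     _ _ _ _ xs le) => //; try lia.
  by move=> z1 z2 z3 z4 z5; exists z1, z2, z3, z4.+1, z5; split; lia.
have x50 : x5 = 0.
  case: x5 xv xs => [|y5] // xv xs; exfalso.
  have Hw : g5 c2 c3 c4 c5 w = 1 + g5 c2 c3 c4 c5 (w - c5) by apply: g5_sub =>//; lia.
  have := M x1 x2 x3 x4 y5.
  rewrite (_ : x1 + c2 * x2 + c3 * x3 + c4 * x4 + c5 * y5 = w - c5); last by lia.
  move=> H; have := H (_ : w - c5 < w); rewrite Hw in xs; lia.
rewrite x50 muln0 addn0 in xv.
have we : 2 * c5 - c3 <= w.
  rewrite leqNgt; apply/negP => lt.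
  have := CC x1 x2 x3 x4 0 0.
  rewrite !muln0 !addn0 xv /g6 divn_small // modn_small //; lia.
have wdc : w < c5 + c4.
  case: (posnP x1) => [e1|/U1]; last by lia.
  case: (posnP x2) => [e2|/U2]; last by lia.
  case: (posnP x3) => [e3|/U3]; last by lia.
  case: (posnP x4) => [e4|/U4]; last by lia.
  by move: xv wp; rewrite e1 e2 e3 e4 !muln0 => <-.
have Z123 : c5 + c3 <= w -> x1 = 0 /\ x2 = 0 /\ x3 = 0.
  move=> le.
  case: (posnP x1) => [e1|/U1]; last by lia.
  case: (posnP x2) => [e2|/U2]; last by lia.
  case: (posnP x3) => [e3|/U3]; last by lia.
  done.
have C1 := CC 0 0 0 1 1 0.
rewrite !muln0 !muln1 !add0n !addn0 /g6 in C1.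
have [D1 D2] : (c4 + c5) %/ (2 * c5 - c3) = 1 /\ (c4 + c5) %% (2 * c5 - c3) = c4 + c5 - (2 * c5 - c3)
  by apply: div_one; lia.
rewrite D1 D2 in C1; clear D1 D2.
have : let t := c4 + c5 - (2 * c5 - c3) in t = 1 \/ t = c2 \/ t = c3
  by apply: (@g5_small c2 c3 c4 c5) => //; lia.
move=> HT; simpl in HT; case: HT => [T|[T|T]]; last by clear -T h1 h2 h3 h4 h5; lia.
  have [e1 [e2 e3]] : x1 = 0 /\ x2 = 0 /\ x3 = 0 by apply: Z123; lia.
  rewrite e1 e2 e3 !muln0 !add0n in xv.
  clear -xv we wdc T h1 h2 h3 h4 h5.
  case: x4 xv => [|[|[|k]]] xv; rewrite ?muln0 ?muln1 ?mulnS ?muln1 in xv; lia.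
have C2 := CC 0 0 0 2 0 0.
rewrite !muln0 !add0n !addn0 /g6 in C2.
case: (leqP c3 (2 * c2)) => hb.
  have [D3 D4] : (c4 * 2) %/ (2 * c5 - c3) = 1 /\ (c4 * 2) %% (2 * c5 - c3) = c4 * 2 - (2 * c5 - c3)
    by apply: div_one; clear -T hb h1 h2 h3 h4 h5; lia.
  rewrite D3 D4 in C2; clear D3 D4.
  case: (posnP (c4 * 2 - (2 * c5 - c3))) => t0.
    by right; clear -T t0 hb h1 h2 h3 h4 h5; lia.
  have : let t := c4 * 2 - (2 * c5 - c3) in t = 1 \/ t = c2 \/ t = c3.
    by apply: (@g5_small c2 c3 c4 c5) => //; clear -C2 T hb h1 h2 h3 h4 h5 t0; lia.
  move=> HT; simpl in HT; case: HT => [T2|[T2|T2]]; clear -T T2 t0 hb h1 h2 h3 h4 h5.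
  - by left; lia.
  - lia.
  - lia.
rewrite divn_small ?modn_small in C2; last by clear -T hb h1 h2 h3 h4 h5; lia.
  2: by clear -T hb h1 h2 h3 h4 h5; lia.
rewrite g5_sub in C2; last by clear -T hb h1 h2 h3 h4 h5; lia.
  2: by clear -h4; lia.
have : let t := c4 * 2 - c5 in t = 1 \/ t = c2 \/ t = c3.
  by apply: (@g5_small c2 c3 c4 c5) => //; clear -C2 T hb h1 h2 h3 h4 h5; lia.
move=> HT; simpl in HT; case: HT => [T2|[T2|T2]].
- by clear -T T2 hb h1 h2 h3 h4 h5; lia.
- by clear -T T2 hb h1 h2 h3 h4 h5; lia.
have [e1 [e2 e3]] : x1 = 0 /\ x2 = 0 /\ x3 = 0.
  by apply: Z123; clear -we T T2 hb h1 h2 h3 h4 h5; lia.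
rewrite e1 e2 e3 !muln0 !add0n in xv.
clear -xv we wdc T T2 hb h1 h2 h3 h4 h5.
case: x4 xv => [|[|[|k]]] xv; rewrite ?muln0 ?muln1 ?mulnS ?muln1 in xv; lia.
Qed.
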